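(* Let $j\in\mathbb{N}$, $V_a^*>0$, let $V_a$ be continuous with $0<V_a^{min}\le V_a\le V_a^{max}<\infty$, $\hat V_a=V_a/V_a^*$, let $\mu$ and $x$ be continuous (and bounded on $(-\infty,t]$), $\beta>0$. For $i=1,\dots,j$ define $$x_i(t)=\int_{-\infty}^t g^i_{V_a^*}\Big(\int_\phi^t\hat V_a(s)ds\Big)\frac{\beta x(\phi)}{V_a(\phi)}\exp\!\Big[-\int_\phi^t\mu(x(s))ds\Big]d\phi,$$ where $g^i_b(u)=\frac{b^iu^{i-1}e^{-bu}}{\Gamma(i)}$. Then $$\frac{d}{dt}x_1(t)=\frac{\beta x(t)}{\hat V_a(t)}-V_a(t)x_1(t)-\mu(x(t))x_1(t),$$ $$\frac{d}{dt}x_i(t)=V_a(t)[x_{i-1}(t)-x_i(t)]-\mu(x(t))x_i(t),\qquad i=2,\dots,j.$$ In particular $x_j(t)=A_g(t):=\int_0^\infty g^j_{V_a^*}\big(\int_{t-\phi}^t\hat V_a(s)ds\big)\frac{\beta x(t-\phi)}{V_a(t-\phi)}e^{-\int_{t-\phi}^t\mu(x(s))ds}d\phi$ satisfies this transit chain.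
   Context: $g^i_b$ is the gamma density with shape $i$ and rate $b$; $A_g$ is the delay term of the gamma distributed state-dependent DDE. *)

(* Defs.v *)
From Stdlib Require Import Reals Factorial ClassicalEpsilon.
Open Scope R_scope.

(* Total Riemann integral: RiemannInt of some integrability proof if f is
   Riemann integrable between a and b (value is proof-independent), else 0. *)
Definition RInt (f : R -> R) (a b : R) : R :=
  match excluded_middle_informative (inhabited (Riemann_integrable f a b)) with
  | left H => RiemannInt (epsilon H (fun _ => True))
  | right _ => 0
  end.

Definition lim_minf (g : R -> R) (l : R) : Prop :=
  forall eps, 0 < eps -> exists M, forall a, a <= M -> Rabs (g a - l) < eps.

Definition lim_pinf (g : R -> R) (l : R) : Prop :=
  forall eps, 0 < eps -> exists M, forall b, M <= b -> Rabs (g b - l) < eps.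

(* improper integral  \int_{-oo}^t f  (0 if the limit does not exist) *)
Definition Int_minf (f : R -> R) (t : R) : R :=
  match excluded_middle_informative (exists l, lim_minf (fun a => RInt f a t) l) with
  | left H => proj1_sig (constructive_indefinite_description _ H)
  | right _ => 0
  end.

(* improper integral  \int_a^{+oo} f  (0 if the limit does not exist) *)
Definition Int_pinf (f : R -> R) (a : R) : R :=
  match excluded_middle_informative (exists l, lim_pinf (fun b => RInt f a b) l) with
  | left H => proj1_sig (constructive_indefinite_description _ H)
  | right _ => 0
  end.

Definition gdens (i : nat) (b u : R) : R :=
  b ^ i * u ^ (i - 1) * exp (- (b * u)) / INR (fact (i - 1)).

Definition xi (Vs : R) (Va mu x : R -> R) (beta : R) (i : nat) (t : R) : R :=
  Int_minf (fun phi =>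
      gdens i Vs (RInt (fun s => Va s / Vs) phi t)
      * (beta * x phi / Va phi)
      * exp (- RInt (fun s => mu (x s)) phi t)) t.

Definition A_g (Vs : R) (Va mu x : R -> R) (beta : R) (j : nat) (t : R) : R :=
  Int_pinf (fun phi =>
      gdens j Vs (RInt (fun s => Va s / Vs) (t - phi) t)
      * (beta * x (t - phi) / Va (t - phi))
      * exp (- RInt (fun s => mu (x s)) (t - phi) t)) 0.

(* Main.v *)
Require Import Defs.
From Stdlib Require Import Reals Lra Lia FunctionalExtensionality ClassicalEpsilon Factorial.
From Coquelicot Require Import Coquelicot.
Open Scope R_scope.

Lemma cont_cont (f : R -> R) x : continuity f -> continuous f x.
Proof. intros H. apply continuity_pt_filterlim, H. Qed.

Lemma exRI f a b : continuity f -> ex_RInt f a b.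
Proof. intros H. apply (ex_RInt_continuous (V:=R_CompleteNormedModule)). intros; apply cont_cont, H. Qed.

Lemma RI_bridge f a b : continuity f -> Defs.RInt f a b = RInt f a b.
Proof.
  intros H. unfold Defs.RInt.
  destruct excluded_middle_informative as [I|N].
  - symmetry. apply RInt_Reals.
  - exfalso. apply N. constructor.
    destruct (Rle_dec a b).
    + apply continuity_implies_RiemannInt; auto.
    + apply RiemannInt_P1, continuity_implies_RiemannInt; auto; lra.
Qed.

Lemma lim_minf_uniq g l1 l2 : lim_minf g l1 -> lim_minf g l2 -> l1 = l2.
Proof.
  intros H1 H2. destruct (Req_dec l1 l2) as [e|ne]; auto. exfalso.
  set (e := Rabs (l1 - l2) / 2).
  assert (He : 0 < e) by (unfold e; assert (0 < Rabs (l1 - l2)) by (apply Rabs_pos_lt; intro; apply ne; lra); lra).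
  destruct (H1 e He) as [M1 HM1]. destruct (H2 e He) as [M2 HM2].
  specialize (HM1 (Rmin M1 M2) (Rmin_l _ _)). specialize (HM2 (Rmin M1 M2) (Rmin_r _ _)).
  unfold e in *. revert HM1 HM2. unfold Rabs; repeat destruct Rcase_abs; lra.
Qed.

Lemma lim_pinf_uniq g l1 l2 : lim_pinf g l1 -> lim_pinf g l2 -> l1 = l2.
Proof.
  intros H1 H2. apply (lim_minf_uniq (fun a => g (- a))).
  - intros e He. destruct (H1 e He) as [M HM]. exists (-M). intros a Ha. apply HM. lra.
  - intros e He. destruct (H2 e He) as [M HM]. exists (-M). intros a Ha. apply HM. lra.
Qed.

Definition is_Imin f t l := lim_minf (fun a => Defs.RInt f a t) l.

Lemma Int_minf_eq f t l : is_Imin f t l -> Int_minf f t = l.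
Proof.
  intros H. unfold Int_minf. destruct excluded_middle_informative as [E|N].
  - destruct constructive_indefinite_description as [l' Hl']. simpl.
    exact (lim_minf_uniq _ _ _ Hl' H).
  - exfalso; apply N; eauto.
Qed.

Lemma Int_pinf_eq f a l : lim_pinf (fun b => Defs.RInt f a b) l -> Int_pinf f a = l.
Proof.
  intros H. unfold Int_pinf. destruct excluded_middle_informative as [E|N].
  - destruct constructive_indefinite_description as [l' Hl']. simpl.
    exact (lim_pinf_uniq _ _ _ Hl' H).
  - exfalso; apply N; eauto.
Qed.

Lemma D_mult f g x a b : is_derive f x a -> is_derive g x b ->
  is_derive (fun y => f y * g y) x (a * g x + f x * b).
Proof. intros Ha Hb. apply (is_derive_mult f g x a b Ha Hb). intros; apply Rmult_comm. Qed.
Lemma D_plus f g x a b : is_derive f x a -> is_derive g x b ->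
  is_derive (fun y => f y + g y) x (a + b).
Proof. intros Ha Hb. apply (is_derive_plus f g x a b Ha Hb). Qed.
Lemma D_minus f g x a b : is_derive f x a -> is_derive g x b ->
  is_derive (fun y => f y - g y) x (a - b).
Proof. intros Ha Hb. apply (is_derive_minus f g x a b Ha Hb). Qed.
Lemma D_const (c x : R) : is_derive (fun _ => c) x 0.
Proof. apply (is_derive_const c x). Qed.
Lemma D_expc f x a : is_derive f x a -> is_derive (fun y => exp (f y)) x (a * exp (f x)).
Proof. intros H. apply (is_derive_comp exp f x (exp (f x)) a (is_derive_exp (f x)) H). Qed.
Lemma D_ext (f g : R -> R) x a b : (forall y, f y = g y) -> a = b -> is_derive f x a -> is_derive g x b.
Proof. intros E e H. subst. eapply is_derive_ext; eauto. Qed.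

Lemma Chasles f a b c : continuity f -> RInt f a b + RInt f b c = RInt f a c.
Proof. intros H. apply (RInt_Chasles (V:=R_CompleteNormedModule)); apply exRI; auto. Qed.

Lemma RInt_sw f a b : continuity f -> RInt f a b = - RInt f b a.
Proof. intros H. rewrite <- (opp_RInt_swap (V:=R_CompleteNormedModule)); [|apply exRI; auto].
  simpl. unfold opp; simpl. ring. Qed.

Lemma RInt_pt f a : RInt f a a = 0.
Proof. apply (RInt_point (V:=R_CompleteNormedModule)). Qed.

Lemma Imin_shift f t s l : continuity f -> is_Imin f t l -> is_Imin f s (l + RInt f t s).
Proof.
  intros C H e He. destruct (H e He) as [M HM]. exists M. intros a Ha.
  rewrite RI_bridge; auto. rewrite <- (Chasles f a t s C).
  specialize (HM a Ha). rewrite RI_bridge in HM; auto.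
  replace (RInt f a t + RInt f t s - (l + RInt f t s)) with (RInt f a t - l) by ring. auto.
Qed.

Lemma FTC_Imin f L t : continuity f -> (forall s, is_Imin f s (L s)) -> is_derive L t (f t).
Proof.
  intros C H.
  assert (E : forall s, L s = L t + RInt f t s).
  { intros s. apply (lim_minf_uniq (fun a => Defs.RInt f a s)). apply H.
    apply Imin_shift; auto. }
  apply (D_ext (fun s => L t + RInt f t s) L t (0 + f t)).
  { intros; rewrite (E y); auto. } { apply Rplus_0_l. } apply D_plus. apply D_const.
  apply (is_derive_RInt (V:=R_CompleteNormedModule) f (fun s => RInt f t s) t t).
  - apply filter_forall. intros b. apply (RInt_correct (V:=R_CompleteNormedModule)). apply exRI; auto.
  - apply cont_cont; auto.
Qed.

Lemma Imin_plus f g t l1 l2 : continuity f -> continuity g ->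
  is_Imin f t l1 -> is_Imin g t l2 -> is_Imin (fun y => f y + g y) t (l1 + l2).
Proof.
  intros Cf Cg H1 H2 e He.
  destruct (H1 (e/2) ltac:(lra)) as [M1 HM1]. destruct (H2 (e/2) ltac:(lra)) as [M2 HM2].
  exists (Rmin M1 M2). intros a Ha.
  specialize (HM1 a (Rle_trans _ _ _ Ha (Rmin_l _ _))).
  specialize (HM2 a (Rle_trans _ _ _ Ha (Rmin_r _ _))).
  rewrite RI_bridge in *; auto; [| apply continuity_plus; auto].
  rewrite (RInt_plus (V:=R_CompleteNormedModule)); try apply exRI; auto.
  simpl. unfold plus; simpl.
  replace (RInt f a t + RInt g a t - (l1 + l2)) with ((RInt f a t - l1) + (RInt g a t - l2)) by ring.
  eapply Rle_lt_trans. apply Rabs_triang. lra.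
Qed.

Lemma Imin_scal f c t l : continuity f -> is_Imin f t l -> is_Imin (fun y => c * f y) t (c * l).
Proof.
  intros Cf H e He.
  destruct (H (e / (Rabs c + 1))) as [M HM].
  { apply Rdiv_lt_0_compat; auto. pose proof (Rabs_pos c); lra. }
  exists M. intros a Ha. specialize (HM a Ha).
  rewrite RI_bridge in *; auto; [| apply continuity_scal; auto].
  rewrite (RInt_scal (V:=R_CompleteNormedModule)); try apply exRI; auto.
  simpl. unfold scal; simpl. unfold mult; simpl.
  replace (c * RInt f a t - c * l) with (c * (RInt f a t - l)) by ring.
  rewrite Rabs_mult. pose proof (Rabs_pos c). pose proof (Rabs_pos (RInt f a t - l)).
  apply Rle_lt_trans with ((Rabs c + 1) * Rabs (RInt f a t - l)). nra.
  apply Rmult_lt_compat_l with (r:= Rabs c + 1) in HM; [|lra].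
  replace ((Rabs c + 1) * (e / (Rabs c + 1))) with e in HM by (field; lra). auto.
Qed.

Lemma D_ext' (f g : R -> R) x (a b : R) : (forall y, f y = g y) -> a = b -> is_derive f x a -> is_derive g x b.
Proof. apply D_ext. Qed.

Lemma cont_of_der (f df : R -> R) : (forall x, is_derive f x (df x)) -> continuity f.
Proof.
  intros H x. apply derivable_continuous_pt. exists (df x). apply is_derive_Reals, H.
Qed.

Lemma RInt_exp M c a b : 0 < c -> RInt (fun p => M * exp (c * p)) a b = M / c * (exp (c * b) - exp (c * a)).
Proof.
  intros Hc.
  apply (is_RInt_unique (V:=R_CompleteNormedModule)).
  assert (H := is_RInt_derive (V:=R_CompleteNormedModule) (fun p => M / c * exp (c * p)) (fun p => M * exp (c * p)) a b).
  replace (M / c * (exp (c * b) - exp (c * a))) with (minus (M / c * exp (c * b)) (M / c * exp (c * a))).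
  apply H.
  - intros p _. auto_derive; auto. field. lra.
  - intros p _. apply cont_cont. apply (cont_of_der _ (fun p => M * c * exp (c * p))).
    intros y. auto_derive; auto. ring.
  - unfold minus, plus, opp; simpl. ring.
Qed.

Lemma exp_le x y : x <= y -> exp x <= exp y.
Proof. intros [h|h]. left; apply exp_increasing; auto. subst; lra. Qed.

Definition decf (t c M : R) (v : R -> R) := forall p, p <= t -> Rabs (v p) <= M * exp (c * p).

Lemma dec_bound v t c M a b : continuity v -> 0 < c -> decf t c M v -> a <= b -> b <= t ->
  Rabs (RInt v a b) <= M / c * exp (c * b).
Proof.
  intros C Hc D ab bt.
  assert (HM : 0 <= M).
  { assert (h := D a ltac:(lra)). pose proof (Rabs_pos (v a)). pose proof (exp_pos (c * a)). nra. }
  eapply Rle_trans. apply abs_RInt_le; auto. apply exRI; auto.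
  eapply Rle_trans. apply (RInt_le _ (fun p => M * exp (c * p))); auto.
  - apply exRI. intro y. apply (continuity_pt_comp v Rabs y); auto. apply Rcontinuity_abs.
  - apply exRI. apply (cont_of_der _ (fun p => M * c * exp (c * p))). intros y. auto_derive; auto. ring.
  - intros y Hy. apply D. lra.
  - rewrite RInt_exp; auto. pose proof (exp_pos (c * a)).
    assert (0 <= M / c) by (apply Rdiv_le_0_compat; lra). nra.
Qed.

Definition dec (v : R -> R) := continuity v /\ exists c, 0 < c /\ forall t, exists M, decf t c M v.

Lemma dec_cauchy v t c M : continuity v -> 0 < c -> decf t c M v -> forall e, 0 < e ->
  exists B, B <= t /\ forall a b, a <= B -> b <= B -> Rabs (RInt v a t - RInt v b t) < e.
Proof.
  intros C Hc D e He.
  set (b0 := ln (e * c / (2 * (Rabs M + 1))) / c).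
  exists (Rmin b0 t). split. apply Rmin_r.
  assert (key : forall a b, a <= b -> b <= Rmin b0 t -> Rabs (RInt v a t - RInt v b t) < e).
  { intros a b ab hb.
    rewrite <- (Chasles v a b t C). unfold Rminus; rewrite Rplus_assoc, Rplus_opp_r, Rplus_0_r.
    eapply Rle_lt_trans. apply (dec_bound v t c M); auto. 
    apply (Rle_trans _ _ _ hb (Rmin_r _ _)).
    assert (hb0 : b <= b0) by (apply (Rle_trans _ _ _ hb (Rmin_l _ _))).
    assert (E1 : exp (c * b) <= e * c / (2 * (Rabs M + 1))).
    { rewrite <- (exp_ln (e * c / (2 * (Rabs M + 1)))).
      2:{ pose proof (Rabs_pos M). apply Rdiv_lt_0_compat; nra. }
      apply exp_le. unfold b0 in hb0. 
      apply Rmult_le_compat_l with (r := c) in hb0; [|lra].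
      replace (c * (ln (e * c / (2 * (Rabs M + 1))) / c)) with (ln (e * c / (2 * (Rabs M + 1)))) in hb0 by (field; lra).
      lra. }
    pose proof (Rabs_pos M). pose proof (Rle_abs M). pose proof (exp_pos (c*b)).
    apply Rle_lt_trans with (Rabs M / c * exp (c * b)).
    { unfold Rdiv. apply Rmult_le_compat_r; [lra|]. apply Rmult_le_compat_r; [|lra]. 
      left; apply Rinv_0_lt_compat; lra. }
    apply Rle_lt_trans with (Rabs M / c * (e * c / (2 * (Rabs M + 1)))).
    { apply Rmult_le_compat_l; auto. apply Rdiv_le_0_compat; lra. }
    replace (Rabs M / c * (e * c / (2 * (Rabs M + 1)))) with (e * (Rabs M / (2 * (Rabs M + 1)))) by (field; lra).
    assert (Rabs M / (2 * (Rabs M + 1)) < 1).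
    { apply (Rmult_lt_reg_r (2 * (Rabs M + 1))). lra. unfold Rdiv. rewrite Rmult_assoc, Rinv_l; lra. }
    nra. }
  intros a b ha hb. destruct (Rle_dec a b).
  - apply key; auto.
  - rewrite Rabs_minus_sym. apply key; auto; lra.
Qed.

Lemma nat_big B : exists N : nat, forall n, (N <= n)%nat -> - INR n <= B.
Proof.
  destruct (nfloor_ex (Rabs B) (Rabs_pos B)) as [n Hn].
  exists (S n). intros m Hm. apply le_INR in Hm. rewrite S_INR in Hm.
  pose proof (Rle_abs (-B)) as HH. rewrite Rabs_Ropp in HH. destruct Hn. clear -H0 Hm HH. revert H0 Hm HH. generalize (INR n) (INR m) (Rabs B). intros. lra.
Qed.

Lemma dec_ex v t : dec v -> exists l, is_Imin v t l.
Proof.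
  intros [C [c [Hc HD]]]. destruct (HD t) as [M D].
  set (u := fun n : nat => RInt v (- INR n) t).
  assert (Cu : ex_lim_seq_cauchy u).
  { intros [e He]. simpl. destruct (dec_cauchy v t c M C Hc D e He) as [B [_ HB]].
    destruct (nat_big B) as [N HN]. exists N. intros n m Hn Hm. unfold u. apply HB; auto. }
  apply ex_lim_seq_cauchy_corr, Lim_seq_correct', is_lim_seq_spec in Cu.
  exists (Lim_seq u). intros e He.
  destruct (dec_cauchy v t c M C Hc D (e/2) ltac:(lra)) as [B [Bt HB]].
  destruct (Cu (mkposreal (e/2) ltac:(lra))) as [N1 HN1].
  destruct (nat_big B) as [N2 HN2].
  exists B. intros a Ha. rewrite RI_bridge; auto.
  set (n := max N1 N2).
  specialize (HN1 n (Nat.le_max_l _ _)). specialize (HN2 n (Nat.le_max_r _ _)). simpl in HN1.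
  specialize (HB a (- INR n) Ha HN2). unfold u in HN1.
  replace (RInt v a t - Lim_seq u) with ((RInt v a t - RInt v (- INR n) t) + (RInt v (- INR n) t - Lim_seq u)) by (simpl; ring).
  eapply Rle_lt_trans. apply Rabs_triang. unfold u in *. lra.
Qed.

Lemma c_mult f g : continuity f -> continuity g -> continuity (fun y => f y * g y).
Proof. intros. apply (continuity_mult f g); auto. Qed.
Lemma c_plus f g : continuity f -> continuity g -> continuity (fun y => f y + g y).
Proof. intros. apply (continuity_plus f g); auto. Qed.
Lemma c_minus f g : continuity f -> continuity g -> continuity (fun y => f y - g y).
Proof. intros. apply (continuity_minus f g); auto. Qed.
Lemma c_const (k : R) : continuity (fun _ => k).
Proof. apply continuity_const. intros a b; auto. Qed.
Lemma c_id : continuity (fun y => y).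
Proof. apply derivable_continuous, derivable_id. Qed.
Lemma c_exp f : continuity f -> continuity (fun y => exp (f y)).
Proof. intros H y. apply (continuity_pt_comp f exp y); auto. apply derivable_continuous_pt, derivable_pt_exp. Qed.
Lemma c_comp f g : continuity f -> continuity g -> continuity (fun y => g (f y)).
Proof. intros H1 H2 y. apply (continuity_pt_comp f g y); auto. Qed.
Lemma c_div f g : continuity f -> continuity g -> (forall y, g y <> 0) -> continuity (fun y => f y / g y).
Proof. intros H1 H2 H3 y. apply (continuity_pt_div f g); auto. Qed.
Lemma c_pow f n : continuity f -> continuity (fun y => f y ^ n).
Proof. intros H. induction n. simpl. apply c_const. simpl. apply c_mult; auto. Qed.

Lemma Imin_minus f g t l1 l2 : continuity f -> continuity g ->
  is_Imin f t l1 -> is_Imin g t l2 -> is_Imin (fun y => f y - g y) t (l1 - l2).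
Proof.
  intros Cf Cg H1 H2.
  assert (H := Imin_plus f (fun y => -1 * g y) t l1 (-1 * l2) Cf
     (c_mult _ _ (c_const (-1)) Cg) H1 (Imin_scal g (-1) t l2 Cg H2)).
  replace (l1 - l2) with (l1 + -1 * l2) by ring.
  replace (fun y => f y - g y) with (fun y => f y + -1 * g y); auto.
  apply functional_extensionality; intros; ring.
Qed.

Lemma lin_exp_bound c t p : 0 < c -> p <= t ->
  Rabs p * exp (c / 2 * p) <= 2 / c + Rabs t * exp (c / 2 * Rabs t).
Proof.
  intros Hc Hp. pose proof (Rabs_pos t). pose proof (exp_pos (c/2 * Rabs t)).
  destruct (Rle_dec p 0).
  - rewrite Rabs_left1; auto.
    assert (E : - (c/2*p) <= exp (- (c / 2 * p))).
    { destruct (Req_dec p 0). subst. rewrite Rmult_0_r, Ropp_0, exp_0. lra.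
      left. apply Rlt_trans with (1 + - (c/2*p)); [lra|]. apply exp_ineq1. nra. }
    assert (-p * exp (c/2*p) <= 2/c).
    { apply (Rmult_le_reg_l (c/2)). lra. 
      replace (c/2 * (2/c)) with 1 by (field; lra).
      replace (c / 2 * (- p * exp (c / 2 * p))) with (-(c/2*p) * exp (c/2*p)) by ring.
      apply Rle_trans with (exp (- (c / 2 * p)) * exp (c / 2 * p)).
      apply Rmult_le_compat_r; auto. left; apply exp_pos.
      rewrite <- exp_plus. replace (- (c / 2 * p) + c / 2 * p) with 0 by ring. rewrite exp_0. lra. }
    nra.
  - assert (Rabs p <= Rabs t) by (rewrite !Rabs_pos_eq; lra).
    assert (exp (c/2*p) <= exp (c/2*Rabs t)).
    { apply exp_le. pose proof (Rle_abs t). nra. }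
    assert (Rabs p * exp (c/2*p) <= Rabs t * exp (c/2*Rabs t)).
    { apply Rmult_le_compat; auto. apply Rabs_pos. left; apply exp_pos. }
    assert (0 < 2/c) by (apply Rdiv_lt_0_compat; lra). lra.
Qed.

Lemma dec_lin v g : dec v -> continuity g -> (exists A B, forall p, Rabs (g p) <= A + B * Rabs p) ->
  dec (fun p => g p * v p).
Proof.
  intros [C [c [Hc HD]]] Cg [A [B HAB]].
  split. apply c_mult; auto.
  exists (c/2). split. lra. intros t. destruct (HD t) as [M D].
  set (E := exp (c / 2 * Rabs t)).
  exists (Rabs M * (Rabs A * E + Rabs B * (2 / c + Rabs t * E))).
  intros p Hp.
  assert (Hv := D p Hp). assert (HM : 0 <= M).
  { pose proof (Rabs_pos (v p)). pose proof (exp_pos (c * p)). nra. }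
  rewrite Rabs_mult.
  assert (G : Rabs (g p) <= Rabs A + Rabs B * Rabs p).
  { eapply Rle_trans. apply HAB. pose proof (Rle_abs A). pose proof (Rle_abs B). pose proof (Rabs_pos p). nra. }
  assert (L := lin_exp_bound c t p Hc Hp).
  assert (X : exp (c/2*p) <= E). { apply exp_le. pose proof (Rle_abs t). nra. }
  assert (SS : exp (c * p) = exp (c/2*p) * exp (c/2*p)).
  { rewrite <- exp_plus. replace (c / 2 * p + c / 2 * p) with (c * p) by field. auto. }
  rewrite Rabs_pos_eq with (x := M) in *; auto.
  apply Rle_trans with ((Rabs A + Rabs B * Rabs p) * (M * exp (c * p))).
  { apply Rmult_le_compat; auto; apply Rabs_pos. }
  rewrite SS.
  pose proof (exp_pos (c/2*p)). pose proof (Rabs_pos A). pose proof (Rabs_pos B). pose proof (Rabs_pos p).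
  replace ((Rabs A + Rabs B * Rabs p) * (M * (exp (c / 2 * p) * exp (c / 2 * p))))
    with (M * (Rabs A * exp (c/2*p) + Rabs B * (Rabs p * exp (c/2*p))) * exp (c/2*p)) by ring.
  apply Rmult_le_compat_r. lra. apply Rmult_le_compat_l; auto.
  apply Rplus_le_compat. apply Rmult_le_compat_l; auto. apply Rmult_le_compat_l; auto.
Qed.

Definition Pf (f : R -> R) (t : R) : R := RInt f 0 t.

Lemma Pf_der f t : continuity f -> is_derive (Pf f) t (f t).
Proof.
  intros C. apply (is_derive_RInt (V:=R_CompleteNormedModule) f (Pf f) 0 t).
  - apply filter_forall. intros b. apply (RInt_correct (V:=R_CompleteNormedModule)). apply exRI; auto.
  - apply cont_cont; auto.
Qed.

Lemma Pf_cont f : continuity f -> continuity (Pf f).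
Proof. intros C. apply (cont_of_der _ f). intros; apply Pf_der; auto. Qed.

Lemma Pf_diff f a b : continuity f -> RInt f a b = Pf f b - Pf f a.
Proof. intros C. unfold Pf. rewrite <- (Chasles f 0 a b C). unfold Rminus. rewrite (Rplus_comm (RInt f 0 a)), Rplus_assoc, Rplus_opp_r, Rplus_0_r. auto. Qed.

Lemma Pf_lin f K p : continuity f -> (forall s, Rabs (f s) <= K) -> Rabs (Pf f p) <= K * Rabs p.
Proof.
  intros C H. unfold Pf. destruct (Rle_dec 0 p).
  - rewrite (Rabs_pos_eq p); auto. replace (K * p) with ((p - 0) * K) by ring.
    apply abs_RInt_le_const; auto. apply exRI; auto.
  - rewrite RInt_sw; auto. rewrite Rabs_Ropp. rewrite (Rabs_left p); [|lra].
    replace (K * - p) with ((0 - p) * K) by ring.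
    apply abs_RInt_le_const; [lra| apply exRI; auto | auto].
Qed.

Lemma dec_pow f K v s n : continuity f -> (forall s, Rabs (f s) <= K) -> dec v ->
  dec (fun p => (s - Pf f p) ^ n * v p).
Proof.
  intros C H D. induction n.
  - simpl. replace (fun p => 1 * v p) with v; auto. apply functional_extensionality; intros; ring.
  - replace (fun p => (s - Pf f p) ^ S n * v p) with (fun p => (s - Pf f p) * ((s - Pf f p) ^ n * v p)).
    2:{ apply functional_extensionality; intros; simpl; ring. }
    apply dec_lin; auto. apply c_minus. apply c_const. apply Pf_cont; auto.
    exists (Rabs s), K. intros p. eapply Rle_trans. apply Rabs_triang.
    rewrite Rabs_Ropp. pose proof (Pf_lin f K p C H). lra.
Qed.

Definition Hm f v m t := Int_minf (fun p => (Pf f t - Pf f p) ^ m * v p) t.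

Lemma Hm_is f K v m t : continuity f -> (forall s, Rabs (f s) <= K) -> dec v ->
  is_Imin (fun p => (Pf f t - Pf f p) ^ m * v p) t (Hm f v m t).
Proof.
  intros C H D. destruct (dec_ex (fun p => (Pf f t - Pf f p) ^ m * v p) t (dec_pow f K v _ m C H D)) as [l Hl].
  unfold Hm. rewrite (Int_minf_eq _ _ _ Hl). auto.
Qed.

Lemma dec_Pv f K v : continuity f -> (forall s, Rabs (f s) <= K) -> dec v -> dec (fun p => Pf f p * v p).
Proof.
  intros C H D. apply dec_lin; auto. apply Pf_cont; auto. exists 0, K. intros p.
  pose proof (Pf_lin f K p C H). lra.
Qed.

Lemma Hm_rec f K v n t : continuity f -> (forall s, Rabs (f s) <= K) -> dec v ->
  Hm f v (S n) t = Pf f t * Hm f v n t - Hm f (fun p => Pf f p * v p) n t.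
Proof.
  intros C H D.
  assert (D' := dec_Pv f K v C H D).
  apply Int_minf_eq.
  replace (fun p => (Pf f t - Pf f p) ^ S n * v p) with
    (fun p => Pf f t * ((Pf f t - Pf f p) ^ n * v p) - (Pf f t - Pf f p) ^ n * (Pf f p * v p)).
  2:{ apply functional_extensionality; intros; simpl; ring. }
  apply Imin_minus.
  - apply c_mult. apply c_const. apply (dec_pow f K v _ n C H D).
  - apply (dec_pow f K _ _ n C H D').
  - apply Imin_scal. apply (dec_pow f K v _ n C H D). apply Hm_is with K; auto.
  - apply Hm_is with K; auto.
Qed.

Lemma Hm0_der f K v t : continuity f -> (forall s, Rabs (f s) <= K) -> dec v ->
  is_derive (Hm f v 0) t (v t).
Proof.
  intros C H D.
  apply (D_ext' (fun s => Int_minf (fun p => 1 * v p) s) _ t (1 * v t)); [intros; reflexivity| ring|].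
  apply (FTC_Imin (fun p => 1 * v p)). apply c_mult. apply c_const. apply D.
  intros s. apply (Hm_is f K v 0 s C H D).
Qed.

Lemma Hm_der f K n : continuity f -> (forall s, Rabs (f s) <= K) -> forall v, dec v -> forall t,
  is_derive (Hm f v (S n)) t (INR (S n) * f t * Hm f v n t).
Proof.
  intros C H. induction n; intros v D t.
  - assert (D' := dec_Pv f K v C H D).
    apply (D_ext' (fun s => Pf f s * Hm f v 0 s - Hm f (fun p => Pf f p * v p) 0 s) _ t
      (f t * Hm f v 0 t + Pf f t * v t - Pf f t * v t)).
    { intros; symmetry; apply Hm_rec with K; auto. }
    2:{ apply D_minus. apply D_mult. apply Pf_der; auto. apply (Hm0_der f K v t); auto.
        apply (Hm0_der f K (fun p => Pf f p * v p) t); auto. }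
    simpl. ring.
  - assert (D' := dec_Pv f K v C H D).
    apply (D_ext' (fun s => Pf f s * Hm f v (S n) s - Hm f (fun p => Pf f p * v p) (S n) s) _ t
      (f t * Hm f v (S n) t + Pf f t * (INR (S n) * f t * Hm f v n t) - INR (S n) * f t * Hm f (fun p => Pf f p * v p) n t)).
    { intros; symmetry; apply Hm_rec with K; auto. }
    2:{ apply D_minus. apply D_mult. apply Pf_der; auto. apply (IHn v); auto. apply (IHn (fun p => Pf f p * v p)); auto. }

    rewrite (Hm_rec f K v n t C H D). rewrite !S_INR. ring.
Qed.

Lemma RInt_lb f a b k : a <= b -> continuity f -> (forall s, k <= f s) -> (b - a) * k <= RInt f a b.
Proof.
  intros ab C H.
  assert (E : RInt (fun _ => k) a b = (b - a) * k).
  { rewrite (RInt_const (V:=R_CompleteNormedModule)). reflexivity. }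
  rewrite <- E. apply RInt_le; [lra | apply exRI, c_const | apply exRI; auto | intros; apply H].
Qed.


Definition fa (Va : R -> R) (Vs : R) := fun s => Va s / Vs.
Definition fm (mu x : R -> R) := fun s => mu (x s).
Definition wf Vs (Va mu x : R -> R) beta := fun p => beta * x p / Va p * exp (Vs * Pf (fa Va Vs) p + Pf (fm mu x) p).
Definition Kf Vs (Va mu x : R -> R) (i : nat) t := Vs ^ i / INR (fact (i - 1)) * exp (- (Vs * Pf (fa Va Vs) t + Pf (fm mu x) t)).

Lemma dec_w Vs Va mu x beta Vmin Vmax : 0 < Vs ->
  continuity Va -> 0 < Vmin -> (forall s, Vmin <= Va s <= Vmax) ->
  continuity mu -> (forall y, 0 <= mu y) ->
  continuity x -> (forall t, exists M, forall s, s <= t -> Rabs (x s) <= M) ->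
  0 < beta -> dec (wf Vs Va mu x beta).
Proof.
  intros HVs CVa HVmin HVa Cmu Hmu Cx Hx Hb.
  assert (Cfa : continuity (fa Va Vs)) by (unfold fa; apply (c_div Va (fun _ => Vs)); [auto | apply c_const | intros; lra]).
  assert (Cfm : continuity (fm mu x)) by (unfold fm; apply (c_comp x mu); auto).
  assert (Va0 : forall s, Va s <> 0) by (intros s; specialize (HVa s); lra).
  split.
  { apply c_mult. apply c_div; auto. apply c_mult; auto. apply c_const.
    apply c_exp. apply c_plus. apply c_mult. apply c_const. apply Pf_cont; auto. apply Pf_cont; auto. }
  exists Vmin. split; auto. intros t. destruct (Hx t) as [Mx HMx].
  set (Pa := Pf (fa Va Vs)). set (Pm := Pf (fm mu x)).
  exists (beta * Mx / Vmin * exp (Vs * Pa t + Pm t - Vmin * t)).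
  intros p Hp. unfold wf. fold Pa Pm.
  assert (HMx0 : 0 <= Mx) by (pose proof (Rabs_pos (x p)); specialize (HMx p Hp); lra).
  assert (I1 : (t - p) * (Vmin / Vs) <= Pa t - Pa p).
  { unfold Pa. rewrite <- Pf_diff; auto. apply RInt_lb; [lra | auto |].
    intros s. unfold fa. specialize (HVa s). apply Rmult_le_compat_r. left; apply Rinv_0_lt_compat; auto. lra. }
  assert (I2 : 0 <= Pm t - Pm p).
  { unfold Pm. rewrite <- Pf_diff; auto. replace 0 with ((t - p) * 0) by ring.
    apply RInt_lb; [lra | auto | intros; apply Hmu]. }
  assert (E : exp (Vs * Pa p + Pm p) <= exp (Vs * Pa t + Pm t - Vmin * t) * exp (Vmin * p)).
  { rewrite <- exp_plus. apply exp_le.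
    replace ((t - p) * (Vmin / Vs)) with ((t - p) * Vmin / Vs) in I1 by (field; lra).
    apply Rmult_le_compat_l with (r := Vs) in I1; [|lra].
    replace (Vs * ((t - p) * Vmin / Vs)) with ((t - p) * Vmin) in I1 by (field; lra). nra. }
  rewrite Rabs_mult. rewrite (Rabs_pos_eq (exp _)); [|left; apply exp_pos].
  assert (A : Rabs (beta * x p / Va p) <= beta * Mx / Vmin).
  { specialize (HVa p). specialize (HMx p Hp).
    unfold Rdiv. rewrite !Rabs_mult. rewrite (Rabs_pos_eq beta); [|lra].
    rewrite Rabs_inv, (Rabs_pos_eq (Va p)); [|lra].
    rewrite Rmult_assoc, Rmult_assoc. apply Rmult_le_compat_l; [lra|].
    apply Rmult_le_compat; auto. apply Rabs_pos. left; apply Rinv_0_lt_compat; lra.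
    apply Rinv_le_contravar; lra. }
  rewrite Rmult_assoc. apply Rmult_le_compat; auto. apply Rabs_pos. left; apply exp_pos.
Qed.

Lemma integrand_eq Vs Va mu x beta Vmin Vmax i t p : 0 < Vs ->
  continuity Va -> 0 < Vmin -> (forall s, Vmin <= Va s <= Vmax) ->
  continuity mu -> continuity x ->
  gdens i Vs (Defs.RInt (fun s => Va s / Vs) p t) * (beta * x p / Va p)
    * exp (- Defs.RInt (fun s => mu (x s)) p t)
  = Kf Vs Va mu x i t * ((Pf (fa Va Vs) t - Pf (fa Va Vs) p) ^ (i - 1) * wf Vs Va mu x beta p).
Proof.
  intros HVs CVa HVmin HVa Cmu Cx.
  assert (Cfa : continuity (fa Va Vs)) by (unfold fa; apply (c_div Va (fun _ => Vs)); [auto | apply c_const | intros; lra]).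
  assert (Cfm : continuity (fm mu x)) by (unfold fm; apply (c_comp x mu); auto).
  change (fun s => Va s / Vs) with (fa Va Vs). change (fun s => mu (x s)) with (fm mu x).
  rewrite !RI_bridge; auto. rewrite !Pf_diff; auto.
  unfold gdens, Kf, wf.
  set (A := Pf (fa Va Vs) t). set (B := Pf (fa Va Vs) p).
  set (C := Pf (fm mu x) t). set (D := Pf (fm mu x) p).
  assert (E : exp (- (Vs * (A - B))) * exp (- (C - D)) = exp (- (Vs * A + C)) * exp (Vs * B + D)).
  { rewrite <- !exp_plus. f_equal. ring. }
  assert (F : INR (fact (i - 1)) <> 0) by apply INR_fact_neq_0.
  assert (Va p <> 0) by (specialize (HVa p); lra).
  transitivity (Vs ^ i * (A - B) ^ (i - 1) / INR (fact (i - 1)) * (beta * x p / Va p) * (exp (- (Vs * (A - B))) * exp (- (C - D)))).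
  { field; auto. }
  rewrite E. field; auto.
Qed.

Lemma cov f t l : continuity f -> is_Imin f t l -> Int_pinf (fun p => f (t - p)) 0 = l.
Proof.
  intros C H. apply Int_pinf_eq. intros e He. destruct (H e He) as [M HM].
  exists (t - M). intros b Hb. specialize (HM (t - b) ltac:(lra)).
  assert (C' : continuity (fun p => f (t - p))) by (apply (c_comp (fun p => t - p) f); auto; apply c_minus; [apply c_const | apply c_id]).
  rewrite RI_bridge in *; auto.
  assert (E : RInt (fun p => f (t - p)) 0 b = RInt f (t - b) t).
  { assert (L := RInt_comp_lin (V:=R_CompleteNormedModule) f (-1) t 0 b (exRI _ _ _ C)).
    rewrite RInt_sw with (a := t - b); auto.
    replace (t - b) with (-1 * b + t) by ring. replace (-1 * 0 + t) with t in L by ring.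
    rewrite <- L.
    rewrite (RInt_scal (V:=R_CompleteNormedModule) (fun y => f (-1 * y + t))).
    2:{ apply exRI. apply (c_comp (fun p => -1 * p + t) f); auto. apply c_plus. apply c_mult. apply c_const. apply c_id. apply c_const. }
    unfold scal; simpl; unfold mult; simpl.
    rewrite (RInt_ext (V:=R_CompleteNormedModule) (fun y => f (-1 * y + t)) (fun p => f (t - p))).
    assert (Q : forall z : R, z = - (-1 * z)) by (intros; ring). apply Q. intros; f_equal; ring. }
  rewrite E. auto.
Qed.

Theorem lemma4p3 (j : nat) (Vs : R) (Va mu x : R -> R) (beta Vmin Vmax : R) :
  0 < Vs ->
  continuity Va -> 0 < Vmin -> (forall s, Vmin <= Va s <= Vmax) ->
  continuity mu -> (forall y, 0 <= mu y) ->
  continuity x -> (forall t, exists M, forall s, s <= t -> Rabs (x s) <= M) ->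
  0 < beta ->
  ((1 <= j)%nat -> forall t,
      derivable_pt_lim (xi Vs Va mu x beta 1) t
        (beta * x t / (Va t / Vs) - Va t * xi Vs Va mu x beta 1 t
         - mu (x t) * xi Vs Va mu x beta 1 t)) /\
  (forall i : nat, (2 <= i <= j)%nat -> forall t,
      derivable_pt_lim (xi Vs Va mu x beta i) t
        (Va t * (xi Vs Va mu x beta (i - 1) t - xi Vs Va mu x beta i t)
         - mu (x t) * xi Vs Va mu x beta i t)) /\
  ((1 <= j)%nat -> forall t, xi Vs Va mu x beta j t = A_g Vs Va mu x beta j t).
Proof.
  intros HVs CVa HVmin HVa Cmu Hmu Cx Hx Hb.
  assert (Cfa : continuity (fa Va Vs)) by (unfold fa; apply (c_div Va (fun _ => Vs)); [auto | apply c_const | intros; lra]).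
  assert (Cfm : continuity (fm mu x)) by (unfold fm; apply (c_comp x mu); auto).
  assert (Dw := dec_w Vs Va mu x beta Vmin Vmax HVs CVa HVmin HVa Cmu Hmu Cx Hx Hb).
  assert (Kb : forall s, Rabs (fa Va Vs s) <= Vmax / Vs).
  { intros s. unfold fa. specialize (HVa s). rewrite Rabs_pos_eq.
    apply Rmult_le_compat_r. left; apply Rinv_0_lt_compat; auto. lra.
    apply Rdiv_le_0_compat; lra. }
  set (w := wf Vs Va mu x beta) in *.
  set (Pa := Pf (fa Va Vs)). set (Pm := Pf (fm mu x)).
  assert (FE : forall i t, (fun phi => gdens i Vs (Defs.RInt (fun s => Va s / Vs) phi t) * (beta * x phi / Va phi)
                * exp (- Defs.RInt (fun s => mu (x s)) phi t))
             = (fun p => Kf Vs Va mu x i t * ((Pa t - Pa p) ^ (i - 1) * w p))).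
  { intros i t. apply functional_extensionality. intros p.
    apply (integrand_eq Vs Va mu x beta Vmin Vmax); auto. }
  assert (IS : forall i t, is_Imin (fun p => Kf Vs Va mu x i t * ((Pa t - Pa p) ^ (i - 1) * w p)) t
                  (Kf Vs Va mu x i t * Hm (fa Va Vs) w (i - 1) t)).
  { intros i t. apply Imin_scal. apply (dec_pow (fa Va Vs) (Vmax / Vs) w _ (i - 1) Cfa Kb Dw).
    apply (Hm_is (fa Va Vs) (Vmax / Vs)); auto. }
  assert (XE : forall i, xi Vs Va mu x beta i = fun t => Kf Vs Va mu x i t * Hm (fa Va Vs) w (i - 1) t).
  { intros i. apply functional_extensionality. intros t. unfold xi. rewrite FE.
    apply Int_minf_eq. apply IS. }
  assert (DK : forall i t, is_derive (Kf Vs Va mu x i) t (- (Va t + mu (x t)) * Kf Vs Va mu x i t)).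
  { intros i t. unfold Kf.
    apply (D_ext' (fun t => Vs ^ i / INR (fact (i - 1)) * exp (0 - (Vs * Pa t + Pm t))) _ t
      (Vs ^ i / INR (fact (i - 1)) * ((0 - (Vs * fa Va Vs t + fm mu x t)) * exp (0 - (Vs * Pa t + Pm t))))).
    { intros; unfold Pa, Pm; f_equal; f_equal; ring. }
    { unfold Pa, Pm. change (fa Va Vs t) with (Va t / Vs). change (fm mu x t) with (mu (x t)).
      replace (0 - (Vs * Pf (fa Va Vs) t + Pf (fm mu x) t)) with (- (Vs * Pf (fa Va Vs) t + Pf (fm mu x) t)) by ring.
      pose proof (INR_fact_neq_0 (i - 1)). field. split; lra. }
    apply (is_derive_scal (fun t => exp (0 - (Vs * Pa t + Pm t)))).
    apply (D_expc (fun t => 0 - (Vs * Pa t + Pm t))).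
    apply (D_minus (fun _ => 0) (fun t => Vs * Pa t + Pm t)). apply D_const.
    apply (D_plus (fun t => Vs * Pa t) Pm).
    apply (is_derive_scal Pa). apply Pf_der; auto. apply Pf_der; auto. }
  split; [|split].
  - intros _ t. apply is_derive_Reals. rewrite XE. simpl (1 - 1)%nat.
    apply (D_ext' (fun t => Kf Vs Va mu x 1 t * Hm (fa Va Vs) w 0 t) _ t
      (- (Va t + mu (x t)) * Kf Vs Va mu x 1 t * Hm (fa Va Vs) w 0 t + Kf Vs Va mu x 1 t * w t)); [auto| |].
    2:{ apply D_mult. apply DK. apply (Hm0_der (fa Va Vs) (Vmax / Vs)); auto. }
    assert (E : Kf Vs Va mu x 1 t * w t = beta * x t / (Va t / Vs)).
    { unfold Kf, w, wf. fold Pa Pm. simpl. 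
      assert (exp (- (Vs * Pa t + Pm t)) * exp (Vs * Pa t + Pm t) = 1).
      { rewrite <- exp_plus. replace (- (Vs * Pa t + Pm t) + (Vs * Pa t + Pm t)) with 0 by ring. apply exp_0. }
      assert (Va t <> 0) by (specialize (HVa t); lra).
      transitivity (Vs * beta * x t / Va t * (exp (- (Vs * Pa t + Pm t)) * exp (Vs * Pa t + Pm t))).
      field; auto. rewrite H. field. split; lra. }
    rewrite E. ring.
  - intros i Hi t. destruct i as [|[|n]]; [lia|lia|].
    apply is_derive_Reals. rewrite !XE.
    replace (S (S n) - 1)%nat with (S n) by lia. replace (S n - 1)%nat with n by lia.
    apply (D_ext' (fun t => Kf Vs Va mu x (S (S n)) t * Hm (fa Va Vs) w (S n) t) _ t
      (- (Va t + mu (x t)) * Kf Vs Va mu x (S (S n)) t * Hm (fa Va Vs) w (S n) t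
       + Kf Vs Va mu x (S (S n)) t * (INR (S n) * fa Va Vs t * Hm (fa Va Vs) w n t))); [auto| |].
    2:{ apply D_mult. apply DK. apply (Hm_der (fa Va Vs) (Vmax / Vs)); auto. }
    assert (E : Kf Vs Va mu x (S (S n)) t * (INR (S n) * fa Va Vs t) = Va t * Kf Vs Va mu x (S n) t).
    { unfold Kf. change (fa Va Vs t) with (Va t / Vs). replace (S (S n) - 1)%nat with (S n) by lia. replace (S n - 1)%nat with n by lia.
      change (fact (S n)) with (S n * fact n)%nat. rewrite mult_INR.
      assert (INR (fact n) <> 0) by apply INR_fact_neq_0.
      assert (INR (S n) <> 0) by (apply not_0_INR; lia).
      change (Vs ^ S (S n)) with (Vs * (Vs * Vs ^ n)). change (Vs ^ S n) with (Vs * Vs ^ n).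
      field. repeat split; auto; lra. }
    replace (Kf Vs Va mu x (S (S n)) t * (INR (S n) * fa Va Vs t * Hm (fa Va Vs) w n t))
      with ((Kf Vs Va mu x (S (S n)) t * (INR (S n) * fa Va Vs t)) * Hm (fa Va Vs) w n t) by ring.
    rewrite E. ring.
  - intros _ t. unfold A_g.
    set (f0 := fun phi => gdens j Vs (Defs.RInt (fun s => Va s / Vs) phi t) * (beta * x phi / Va phi)
                * exp (- Defs.RInt (fun s => mu (x s)) phi t)).
    change (xi Vs Va mu x beta j t) with (Int_minf f0 t).
    change (Int_minf f0 t = Int_pinf (fun phi => f0 (t - phi)) 0). symmetry.
    assert (F0 : f0 = fun p => Kf Vs Va mu x j t * ((Pa t - Pa p) ^ (j - 1) * w p)) by apply FE.
    assert (Cf0 : continuity f0).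
    { rewrite F0. apply c_mult. apply c_const. apply (dec_pow (fa Va Vs) (Vmax / Vs) w _ (j - 1) Cfa Kb Dw). }
    assert (I0 := IS j t). rewrite <- F0 in I0.
    rewrite (Int_minf_eq _ _ _ I0). apply cov; auto.
Qed.
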